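(* Let $X$ be a Sturmian word and let $P$ be a palindrome that is maximal in $X$. Then $P$ also has a non-maximal occurrence in $X$ which is a proper factor of a same-centric maximal palindrome: there are positions $i'<i\le j<j'$ with $i'\ge 2$, $i+j=i'+j'$, $X[i..j]=P$, $X[i-1]=X[j+1]$, $X[i'..j']$ a palindrome, and $X[i'-1]\neq X[j'+1]$.
   Context: A Sturmian word is a right-infinite aperiodic word over $\{a,b\}$ with exactly $n+1$ factors of each length $n$. $X[i..j]$ denotes the factor of $X$ from position $i$ to position $j$. A palindrome is a word equal to its reverse. A palindrome $P$ is maximal in $X$ if $lPl'$ is a factor of $X$ for some letters $l\neq l'$. *)

(* Defs.v *)
(* Infinite words over {a,b} are modelled as X : nat -> bool
   (a = false, b = true), with positions indexed from 0. *)
From mathcomp Require Import all_boot.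
Set Implicit Arguments. Unset Strict Implicit. Unset Printing Implicit Defensive.

Definition word := nat -> bool.

Definition subw (X : word) (i j : nat) : seq bool :=
  [seq X k | k <- iota i (j.+1 - i)].

Definition is_factor (X : word) (w : seq bool) : Prop :=
  exists k, w = [seq X (k + m) | m <- iota 0 (size w)].

Definition complexity_eq (X : word) (n c : nat) : Prop :=
  exists s : seq (seq bool), uniq s /\ size s = c /\
    forall w, w \in s <-> (size w = n /\ is_factor X w).

Definition aperiodic (X : word) : Prop :=
  ~ exists p N, 0 < p /\ forall k, N <= k -> X (k + p) = X k.

Definition sturmian (X : word) : Prop :=
  aperiodic X /\ forall n, complexity_eq X n n.+1.

Definition palindrome (w : seq bool) : Prop := w = rev w.

Definition maximal_pal (X : word) (P : seq bool) : Prop :=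
  exists l l' : bool, l != l' /\ is_factor X (l :: rcons P l').

(* Main.v *)
Require Import Defs.
From mathcomp Require Import all_boot zify.
From Stdlib Require Import ClassicalEpsilon Classical.
Set Implicit Arguments. Unset Strict Implicit. Unset Printing Implicit Defensive.


Definition fac (X : word) k n := mkseq (fun m => X (k + m)) n.

Lemma size_fac X k n : size (fac X k n) = n.
Proof. by rewrite size_mkseq. Qed.

Lemma nth_fac X k n m : m < n -> nth false (fac X k n) m = X (k + m).
Proof. by move=> h; rewrite nth_mkseq. Qed.

Lemma factorE X u : is_factor X u <-> exists k, u = fac X k (size u).
Proof. by []. Qed.

Lemma factor_fac X k n : is_factor X (fac X k n).
Proof. by exists k; rewrite size_fac. Qed.

Lemma fac_eqP X a b n : fac X a n = fac X b n <-> forall m, m < n -> X (a + m) = X (b + m).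
Proof.
split.
  by move=> e m hm; rewrite -(nth_fac X a hm) -(nth_fac X b hm) e.
move=> h; apply: (@eq_from_nth _ false); rewrite ?size_fac // => m hm.
by rewrite !nth_fac // h.
Qed.

Lemma facS X k n : fac X k n.+1 = rcons (fac X k n) (X (k + n)).
Proof. by rewrite /fac /mkseq -addn1 iotaD map_cat /= cats1 add0n. Qed.

Lemma facSl X k n : fac X k n.+1 = X k :: fac X k.+1 n.
Proof.
apply: (@eq_from_nth _ false); first by rewrite size_fac /= size_fac.
rewrite size_fac => -[|m] hm.
  by rewrite nth_fac // addn0.
rewrite [RHS]/= !nth_fac //; try lia; by rewrite addSnnS.
Qed.

Lemma fac_cat X k n m : fac X k (n + m) = fac X k n ++ fac X (k + n) m.
Proof.
apply: (@eq_from_nth _ false); rewrite ?size_cat ?size_fac // => i hi.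
rewrite nth_cat size_fac nth_fac //; case: ifP => h; rewrite nth_fac //; try lia.
by rewrite -addnA subnKC //; lia.
Qed.

Lemma factor_cat X u v : is_factor X (u ++ v) -> is_factor X u /\ is_factor X v.
Proof.
case/factorE=> k; rewrite size_cat fac_cat => e.
have /eqP := e; rewrite eqseq_cat ?size_fac // => /andP[/eqP e1 /eqP e2].
by split; [exists k | exists (k + size u)].
Qed.

Lemma factor_rcons X u x : is_factor X (rcons u x) -> is_factor X u.
Proof. by rewrite -cats1 => /factor_cat[]. Qed.

Lemma factor_cons X x u : is_factor X (x :: u) -> is_factor X u.
Proof. by rewrite -cat1s => /factor_cat[]. Qed.

Definition cdec (P : Prop) : bool := if excluded_middle_informative P then true else false.
Lemma ccdec (P : Prop) : reflect P (cdec P).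
Proof. by rewrite /cdec; case: excluded_middle_informative => h; constructor. Qed.

Fixpoint allw n : seq (seq bool) :=
  if n is n'.+1 then [seq b :: v | b <- [:: true; false], v <- allw n'] else [:: [::]].

Lemma allwP n v : (v \in allw n) = (size v == n).
Proof.
have ci (b : bool) : injective (cons b) by move=> ?? [].
have H (b' b'' : bool) v' n' : b' != b'' -> (b' :: v' \in [seq b'' :: v0 | v0 <- allw n']) = false.
  by move=> ne; apply/mapP => -[x _ [e _]]; rewrite e eqxx in ne.
elim: n v => [|n IH] [|b v] //=; rewrite !mem_cat.
  have H0 (b : bool) n' : ([::] \in [seq b :: v0 | v0 <- allw n']) = false.
    by apply/mapP => -[].
  by rewrite !H0.
case: b; rewrite mem_map ?H ?orbF ?IH ?eqSS //.
Qed.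

Lemma uniq_allw n : uniq (allw n).
Proof.
elim: n => [|n IH] //=; rewrite cats0 cat_uniq !map_inj_uniq ?IH //=; try by move=> ?? [].
rewrite andbT; apply/hasPn => x /mapP [y _ ->]; apply/mapP => -[z _ h]; done.
Qed.

Definition facs X n := [seq v <- allw n | cdec (is_factor X v)].

Lemma facsP X n v : v \in facs X n <-> size v = n /\ is_factor X v.
Proof.
rewrite mem_filter allwP; split.
  by case/andP => /ccdec h /eqP.
by case=> /eqP -> /ccdec ->.
Qed.

Lemma uniq_facs X n : uniq (facs X n).
Proof. exact/filter_uniq/uniq_allw. Qed.

Lemma facs_bound X n l : uniq l -> (forall v, v \in l -> size v = n /\ is_factor X v) ->
  size l <= size (facs X n).
Proof. by move=> u h; apply: uniq_leq_size => // v /h hv; apply/facsP. Qed.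

Lemma sturm_size X n : sturmian X -> size (facs X n) = n.+1.
Proof.
case=> _ /(_ n) [s [us [sz hs]]].
rewrite -sz; apply/perm_size/uniq_perm => //; first exact: uniq_facs.
move=> v; apply/idP/idP => h.
  by apply/hs; apply/facsP.
by apply/facsP; apply/hs.
Qed.

Definition RS X v := is_factor X (rcons v true) /\ is_factor X (rcons v false).
Definition ext X v : bool := cdec (is_factor X (rcons v true)).

Lemma factor_ext X v : is_factor X v -> is_factor X (rcons v (ext X v)).
Proof.
rewrite /ext; case: ccdec => // h [k e].
have : is_factor X (rcons v (X (k + size v))).
  by rewrite {1}e -facS; apply: factor_fac.
by case: (X _) => // /h.
Qed.

Lemma RS_all X v b : RS X v -> is_factor X (rcons v b).
Proof. by case: b => -[]. Qed.

Lemma RS_of X v b b' : b != b' -> is_factor X (rcons v b) -> is_factor X (rcons v b') -> RS X v.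
Proof. by case: b; case: b' => // _ h1 h2; split. Qed.

Lemma rs_count X j r : uniq r -> (forall v, v \in r -> size v = j /\ RS X v) ->
  size (facs X j) + size r <= size (facs X j.+1).
Proof.
move=> ur hr.
set L := [seq rcons v (ext X v) | v <- facs X j] ++ [seq rcons v (~~ ext X v) | v <- r].
have -> : size (facs X j) + size r = size L by rewrite size_cat !size_map.
apply: facs_bound.
  rewrite cat_uniq !map_inj_in_uniq ?uniq_facs ?ur //=.
  - rewrite andbT; apply/hasPn => w /mapP [v _ ->]; apply/mapP => -[v' _ /rcons_inj [e1 e2]].
    by move: e2; rewrite e1; case: (ext X v').
  - by move=> v v' _ _ /rcons_inj [].
  - by move=> v v' _ _ /rcons_inj [].
move=> w; rewrite mem_cat => /orP [] /mapP [v hv ->].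
  by case/facsP: hv => s f; split; [rewrite size_rcons s | exact: factor_ext].
by case/hr: hv => s f; split; [rewrite size_rcons s | exact: RS_all].
Qed.

Lemma rs_exists X j : size (facs X j) < size (facs X j.+1) -> exists v, size v = j /\ RS X v.
Proof.
move=> lt; apply: NNPP => nrs.
suff : size (facs X j.+1) <= size (facs X j) by rewrite leqNgt lt.
rewrite -[X in _ <= X](size_map (fun v => rcons v (ext X v))).
apply: uniq_leq_size; first exact: uniq_facs.
move=> w /facsP [sw fw]; case/lastP: w sw fw => [|v x] //; rewrite size_rcons => -[sv] fx.
have fv := factor_rcons fx.
apply/mapP; exists v; first by apply/facsP.
case: (boolP (x == ext X v)) => [/eqP -> //| ne].
by case: nrs; exists v; split => //; apply: (RS_of ne) => //; exact: factor_ext.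
Qed.

Lemma sturm_RS_uniq X n u v : sturmian X -> size u = n -> size v = n -> RS X u -> RS X v -> u = v.
Proof.
move=> st su sv ru rv; apply: NNPP => ne.
have := @rs_count X n [:: u; v].
rewrite !sturm_size //= inE andbT.
have -> : (u != v) by apply/eqP.
move=> /(_ isT) h; suff : false by [].
have := h _; rewrite addn2 ltnn; apply=> w; rewrite !inE => /orP [] /eqP ->; by split.
Qed.

Lemma facs0 X : size (facs X 0) = 1.
Proof.
rewrite /facs /=; case: ccdec => // h; case: h; by exists 0.
Qed.

Lemma facs_mono X j : size (facs X j) <= size (facs X j.+1).
Proof. by have := @rs_count X j [::] isT; rewrite addn0; apply=> v. Qed.

Lemma MH Y m : size (facs Y m) <= m -> exists p N, 0 < p /\ forall k, N <= k -> Y (k + p) = Y k.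
Proof.
move=> hm.
have [j [jm dj]] : exists j, j < m /\ size (facs Y j.+1) <= size (facs Y j).
  apply: NNPP => nh.
  have : forall i, i <= m -> i < size (facs Y i).
    elim=> [|i IH] hi; first by rewrite facs0.
    have h1 := IH (ltnW hi).
    have h2 : size (facs Y i) < size (facs Y i.+1).
      by rewrite ltnNge; apply/negP => h; apply: nh; exists i; split.
    lia.
  by move=> /(_ m (leqnn m)); rewrite ltnNge hm.
have det : forall a b, fac Y a j = fac Y b j -> Y (a + j) = Y (b + j).
  move=> a b e; apply: NNPP => ne.
  have rs : RS Y (fac Y a j).
    apply: (@RS_of _ _ (Y (a + j)) (Y (b + j))); first by apply/eqP.
      by rewrite -facS; apply: factor_fac.
    by rewrite e -facS; apply: factor_fac.
  have := @rs_count Y j [:: fac Y a j] isT.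
  have : size (facs Y j) + size [:: fac Y a j] <= size (facs Y j.+1) -> False.
    by rewrite addn1 ltnNge dj.
  move=> hf h; apply: hf; apply: h => v; rewrite inE => /eqP ->; split => //; exact: size_fac.
set s := [seq fac Y k j | k <- iota 0 (size (facs Y j)).+1].
have : ~~ uniq s.
  apply/negP => us.
  have : size s <= size (facs Y j).
    apply: facs_bound => // v /mapP [k _ ->]; split; [exact: size_fac | exact: factor_fac].
  by rewrite size_map size_iota ltnn.
case/(uniqPn [::]) => i [i' [lii' li' e]].
move: li' e; rewrite size_map size_iota => li'.
rewrite !(nth_map 0) ?size_iota ?(ltn_trans lii') // !nth_iota ?(ltn_trans lii') // !add0n => e.
have all : forall t, fac Y (i + t) j = fac Y (i' + t) j.
  elim=> [|t IH]; first by rewrite !addn0.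
  apply/fac_eqP => q hq.
  case: (ltnP q.+1 j) => hq'.
    by move/fac_eqP: IH => /(_ q.+1 hq'); rewrite !addnS !addSn.
  have -> : q = j.-1 by lia.
  have := det _ _ IH.
  have -> : i + t + j = i + t.+1 + j.-1 by lia.
  by have -> : i' + t + j = i' + t.+1 + j.-1 by lia.
exists (i' - i), (i + j); split; first by rewrite subn_gt0.
move=> k hk.
have := det _ _ (all (k - j - i)).
have -> : i + (k - j - i) + j = k by lia.
by have -> : i' + (k - j - i) + j = k + (i' - i) by lia.
Qed.

Lemma recur X u N : sturmian X -> is_factor X u -> exists k, N <= k /\ fac X k (size u) = u.
Proof.
move=> st fu; apply: NNPP => nr.
set m := size u; set Y := fun i => X (N + i).
have : size (facs Y m) <= m.
  have um : u \in facs X m by apply/facsP.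
  have hrem : size (rem u (facs X m)) = m by rewrite size_rem // sturm_size.
  suff : size (facs Y m) <= size (rem u (facs X m)) by rewrite hrem.
  apply: uniq_leq_size; first exact: uniq_facs.
  move=> v /facsP [sv /factorE [k ev]].
  rewrite mem_rem_uniq ?uniq_facs // inE; apply/andP; split.
    apply/eqP => evu; apply: nr; exists (N + k); split; first exact: leq_addr.
    rewrite -evu {2}ev; apply: eq_mkseq => q; by rewrite /Y addnA.
  apply/facsP; split => //; exists (N + k); rewrite {1}ev; apply: eq_mkseq => q; by rewrite /Y addnA.
case/MH => p [N' [pp hp]].
case: st => ap _; apply: ap; exists p, (N + N'); split => // k hk.
have := hp (k - N) ltac:(lia); rewrite /Y.
have -> : N + (k - N + p) = k + p by lia.
by have -> : N + (k - N) = k by lia.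
Qed.


Lemma fac_step X a b n : fac X a n = fac X b n -> X (a + n) = X (b + n) ->
  fac X a.+1 n = fac X b.+1 n.
Proof.
move=> /fac_eqP e l; apply/fac_eqP => m hm.
case: (ltnP m.+1 n) => h.
  by have := e _ h; rewrite !addnS !addSn.
have -> : m = n.-1 by lia.
by rewrite !addSnnS prednK //; lia.
Qed.

Lemma pal_nth w m : palindrome w -> m < size w -> nth false w m = nth false w (size w - m.+1).
Proof.
move=> pw hm; rewrite {1}pw nth_rev //.
Qed.

Lemma fac_cons2 X k n : fac X k n.+2 = X k :: rcons (fac X k.+1 n) (X (k.+1 + n)).
Proof. by rewrite facSl facS. Qed.

Lemma ext3 X w : sturmian X -> (forall x y, is_factor X (x :: rcons w y)) -> False.
Proof.
move=> st h4; set n := size w.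
pose pick2 v := epsilon (inhabits (true, true)) (fun p : bool * bool => is_factor X (p.1 :: rcons v p.2)).
pose f v := (pick2 v).1 :: rcons v (pick2 v).2.
have hf : forall v, size v = n -> is_factor X v -> is_factor X (f v).
  move=> v sv fv; rewrite /f /pick2; apply: (epsilon_spec (inhabits (true, true))
    (fun p : bool * bool => is_factor X (p.1 :: rcons v p.2))).
  case: (recur 1 st fv) => k [k1 e].
  exists (X k.-1, X (k.-1.+1 + size v)); rewrite /= -{1}e.
  have -> : k = k.-1.+1 by lia.
  rewrite -fac_cons2; exact: factor_fac.
have finj : forall v v', f v = f v' -> v = v'.
  by move=> v v' [_ /rcons_inj [->]].
have wf : w \in facs X n by apply/facsP; split => //; case: (h4 true true) => k e; apply: (factor_cons (factor_rcons _)); exists k; exact: e.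
set L4 := [:: true :: rcons w true; true :: rcons w false; false :: rcons w true; false :: rcons w false].
set L := [seq f v | v <- rem w (facs X n)] ++ L4.
have : size L <= size (facs X n.+2).
  apply: facs_bound.
    have u1 : uniq [seq f v | v <- rem w (facs X n)].
      by rewrite map_inj_in_uniq ?rem_uniq ?uniq_facs // => ????; apply: finj.
    rewrite cat_uniq u1 andTb; apply/andP; split; last first.
      by rewrite /L4 /= !inE !eqseq_cons !eqseq_rcons !eqxx /=.
    apply/hasPn => z; rewrite /L4 !inE => hz; apply/mapP => -[v hv ez].
    have vw : v = w.
      by move: hz ez; rewrite /f => /or4P [] /eqP -> [_ /rcons_inj []].
    by move: hv; rewrite mem_rem_uniq ?uniq_facs // inE vw eqxx.
  move=> z; rewrite mem_cat => /orP [].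
    case/mapP => v; rewrite mem_rem_uniq ?uniq_facs // inE => /andP [_ /facsP [sv fv]] ->.
    by split; [rewrite /f /= size_rcons sv | exact: hf].
  by rewrite !inE => /or4P [] /eqP ->; split; rewrite /= ?size_rcons //; apply: h4.
rewrite size_cat size_map size_rem // !sturm_size //= /n.
lia.
Qed.

Lemma step_det X w a b : sturmian X -> RS X w -> fac X a (size w) = fac X b (size w) ->
  fac X a (size w) != w -> X (a + size w) = X (b + size w).
Proof.
move=> st rw e ne; apply: NNPP => nl.
have : RS X (fac X a (size w)).
  apply: (@RS_of _ _ (X (a + size w)) (X (b + size w))); first by apply/eqP.
    by rewrite -facS; apply: factor_fac.
  by rewrite e -facS; apply: factor_fac.
move/(sturm_RS_uniq st (size_fac _ _ _) (erefl (size w))) => /(_ rw) h.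
by rewrite h eqxx in ne.
Qed.

Lemma gapb X w q l : sturmian X -> RS X w -> fac X q (size w) = w -> 0 < l ->
  fac X (q + l) (size w) = w -> (forall t, 0 < t < l -> fac X (q + t) (size w) != w) ->
  l <= (size w).+1.
Proof.
move=> st rw e0 l0 el hn; set n := size w.
have aux : forall s t, s < t < l -> fac X (q + s) n = fac X (q + t) n -> False.
  move=> s t /andP [st' tl] e.
  case: (posnP s) => s0.
    have ht : 0 < t < l by lia.
    by move: e (hn t ht); rewrite s0 addn0 e0 => <-; rewrite eqxx.
  have prop : forall k, k <= l - t -> fac X (q + s + k) n = fac X (q + t + k) n.
    elim=> [|k IH] hk; first by rewrite !addn0.
    have IH' := IH (ltnW hk).
    rewrite !addnS; apply: fac_step => //.
    apply: step_det => //; rewrite -/n.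
    have hk' : 0 < s + k < l by lia.
    by have := hn (s + k) hk'; rewrite addnA.
  have := prop (l - t) (leqnn _).
  have -> : q + t + (l - t) = q + l by lia.
  have hk' : 0 < s + (l - t) < l by lia.
  by rewrite el => e'; move: (hn _ hk'); rewrite addnA e' eqxx.
set s := [seq fac X (q + t) n | t <- iota 0 l].
have us : uniq s.
  rewrite map_inj_in_uniq ?iota_uniq // => a b; rewrite !mem_iota !add0n => ha hb e.
  case: (ltngtP a b) => // h.
    by case: (aux a b); [rewrite h hb | exact: e].
  by case: (aux b a); [rewrite h ha | exact: esym e].
have : size s <= size (facs X n).
  by apply: facs_bound => // v /mapP [t _ ->]; split; [exact: size_fac | exact: factor_fac].
by rewrite size_map size_iota sturm_size.
Qed.

Lemma det X w q q' l : sturmian X -> RS X w -> fac X q (size w) = w -> fac X q' (size w) = w ->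
  X (q + size w) = X (q' + size w) -> 0 < l ->
  (forall t, 0 < t < l -> fac X (q + t) (size w) != w) ->
  (forall t, t <= l -> fac X (q' + t) (size w) = fac X (q + t) (size w)) /\
  (forall t, t < l + size w -> X (q' + t) = X (q + t)).
Proof.
move=> st rw e e' x0 l0 hn; set n := size w.
have win : forall t, t <= l -> fac X (q' + t) n = fac X (q + t) n /\
    (t < l -> X (q' + t + n) = X (q + t + n)).
  elim=> [|t IH] ht.
    by rewrite !addn0 e e' x0.
  case: (IH (ltnW ht)) => w1 l1.
  have w2 : fac X (q' + t.+1) n = fac X (q + t.+1) n.
    by rewrite !addnS; apply: fac_step => //; apply: l1.
  split => // htl.
  have ne : fac X (q + t.+1) n != w by apply: hn; lia.
  by apply/esym; apply: step_det; rewrite -/n // -w2 // eq_sym.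
split; first by move=> t /win [].
move=> t ht; case: (ltnP t n) => htn.
  by move/fac_eqP: (etrans e' (esym e)) => /(_ t htn).
have := (win (t - n) ltac:(lia)).2 ltac:(lia).
by rewrite -!addnA subnK.
Qed.

Lemma gapeq X w q l : palindrome w -> fac X q (size w) = w -> fac X (q + l) (size w) = w ->
  0 < l -> l <= (size w).+1 -> X (q + l.-1) = X (q + size w).
Proof.
move=> pw e0 el l0 ln; set n := size w.
case: (ltnP l n.+1) => h; last by have -> : l.-1 = n by lia.
have h1 : l.-1 < n by lia.
rewrite -(nth_fac X q h1) e0 pal_nth // -/n.
have h2 : n - l.-1.+1 < n by lia.
rewrite -{1}el (nth_fac X (q + l) h2).
by congr X; lia.
Qed.

Lemma nopal X w : sturmian X -> palindrome w -> is_factor X (true :: rcons w true) ->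
  is_factor X (false :: rcons w false) -> False.
Proof.
move=> st pw ft ff; set n := size w.
have rw : RS X w by split; [exact: factor_cons ft | exact: factor_cons ff].
have [x [fx nfx]] : exists x, is_factor X (x :: rcons w x) /\ ~ is_factor X (x :: rcons w (~~ x)).
  case: (classic (is_factor X (true :: rcons w false))) => h1.
    case: (classic (is_factor X (false :: rcons w true))) => h2.
      by case: (ext3 st (w := w)) => -[] [].
    by exists false.
  by exists true.
case/factorE: fx => k0; rewrite /= size_rcons fac_cons2 => -[_ /rcons_inj [eq' xq']].
set q := k0.+1.
have eq : fac X q n = w by rewrite eq'.
have xq : X (q + n) = x by rewrite xq'.
have ex : exists l, (0 < l) && (fac X (q + l) n == w).
  case: (recur q.+1 st (factor_fac X q n)) => k [hk ek].
  exists (k - q); apply/andP; split; first by rewrite subn_gt0.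
  rewrite subnKC; last exact: ltnW.
  by move: ek; rewrite size_fac eq => ->.
case: (ex_minnP ex) => l /andP [l0 /eqP el] lmin.
have hn : forall t, 0 < t < l -> fac X (q + t) n != w.
  move=> t /andP [t0 tl]; apply/negP => /eqP et.
  by have := lmin t; rewrite t0 et eqxx => /(_ isT); rewrite leqNgt tl.
have lb : l <= n.+1 by apply: (gapb st rw eq l0 el hn).
have H : forall k, fac X (q + k * l) n = w /\ X (q + k * l + n) = x.
  elim=> [|k [IH1 IH2]]; first by rewrite mul0n addn0.
  have [d1 _] := det st rw eq IH1 (etrans xq (esym IH2)) l0 hn.
  have wl : fac X (q + k * l + l) n = w by rewrite d1 // el.
  have g := gapeq pw IH1 wl l0 lb.
  rewrite -/n IH2 in g.
  have -> : q + k.+1 * l = q + k * l + l by rewrite mulSn; lia.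
  split => //.
  apply: NNPP => ne; apply: nfx.
  have -> : ~~ x = X (q + k * l + l + n) by case: x ne {g IH2 xq xq'} => /=; case: (X _).
  have pS : (q + k * l + l.-1).+1 = q + k * l + l by rewrite -addnS prednK.
  have := factor_fac X (q + k * l + l.-1) n.+2.
  by rewrite fac_cons2 pS wl g.
have per : forall k t, t < l -> X (q + k * l + t) = X (q + t).
  move=> k t tl; case: (H k) => h1 h2.
  have [_ d2] := det st rw eq h1 (etrans xq (esym h2)) l0 hn.
  apply: d2; lia.
case: st => ap _; apply: ap; exists l, q; split => // j hj.
have := divn_eq (j - q) l; set kk := (j - q) %/ l; set tt := (j - q) %% l => dj.
have tl : tt < l by rewrite ltn_pmod.
have -> : j = q + kk * l + tt by lia.
have -> : q + kk * l + tt + l = q + kk.+1 * l + tt by rewrite mulSn; lia.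
by rewrite !per.
Qed.


Definition weight (u : seq bool) := count id u.

Lemma weight_cat u v : weight (u ++ v) = weight u + weight v.
Proof. exact: count_cat. Qed.
Lemma weight_cons x u : weight (x :: u) = x + weight u.
Proof. by []. Qed.
Lemma weight_rev u : weight (rev u) = weight u.
Proof. exact: count_rev. Qed.
Lemma weight1 x : weight [:: x] = x.
Proof. by case: x. Qed.

Lemma firstdiff (u v : seq bool) : size u = size v -> u <> v ->
  exists z c d s t, [/\ c != d, u = z ++ c :: s, v = z ++ d :: t & size s = size t].
Proof.
elim: u v => [|x u IH] [|y v] //= [] sz ne.
case: (boolP (x == y)) => [/eqP exy | nxy].
  have ne' : u <> v by move=> e; apply: ne; rewrite exy e.
  case: (IH v sz ne') => z [c [d [s [t [cd eu ev st]]]]].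
  by exists (x :: z), c, d, s, t; rewrite eu ev exy.
by exists [::], x, y, u, v.
Qed.

Lemma B1 (L : seq bool -> Prop) : (forall u v, L (u ++ v) -> L u /\ L v) ->
  forall n u v, size u <= n -> L u -> L v -> size u = size v -> weight v + 2 <= weight u ->
  exists w, [/\ palindrome w, L (true :: w ++ [:: true]) & L (false :: w ++ [:: false])].
Proof.
move=> Lc; have Lp u v : L (u ++ v) -> L u by case/Lc.
have Ls u v : L (u ++ v) -> L v by case/Lc.
elim=> [|n IH] u v hn Lu Lv sz hw.
  by move: hn hw; rewrite leqn0 => /eqP/size0nil ->; rewrite /weight /=; lia.
case: u hn Lu sz hw => [|x u1] hn Lu.
  by move=> _ h; exfalso; move: h; rewrite /weight /=; lia.
case: v Lv => [|y v1] Lv; first by [].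
move=> [sz1] hw.
have Lu1 : L u1 by apply: (Ls [:: x]).
have Lv1 : L v1 by apply: (Ls [:: y]).
case: (leqP (weight v1 + 2) (weight u1)) => h1.
  by apply: (IH u1 v1).
have [ex ey wu1] : [/\ x = true, y = false & weight u1 = weight v1 + 1].
  move: hw h1; rewrite !weight_cons; case: (x); case: (y) => /=; move=> a b; try (exfalso; lia); split => //; lia.
subst x y.
case/lastP: u1 hn Lu Lu1 sz1 wu1 {h1 hw} => [|u' x'] hn Lu Lu1 sz1 wu1.
  by move: wu1; rewrite /weight /=; lia.
case/lastP: v1 Lv Lv1 sz1 wu1 => [|v' y'] Lv Lv1 sz1 wu1.
  by move: sz1; rewrite size_rcons.
move: hn Lu Lv sz1 wu1; rewrite -!cats1 !size_cat /= !addn1 => hn Lu Lv [sz2] wu1.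
have Lu' : L (true :: u') by apply: (Lp _ [:: x']); rewrite -cat_cons in Lu.
have Lv' : L (false :: v') by apply: (Lp _ [:: y']); rewrite -cat_cons in Lv.
case: (leqP (weight (false :: v') + 2) (weight (true :: u'))) => h2.
  by apply: (IH (true :: u') (false :: v')) => //=; move: hn; rewrite ?size_cat /=; lia.
have [ex ey wu'] : [/\ x' = true, y' = false & weight u' = weight v'].
  move: wu1 h2; rewrite /weight /= !count_cat /=; case: (x'); case: (y') => /=; move=> a b; try (exfalso; lia); split => //; lia.
subst x' y'.
have IHs : forall a b, size a <= n -> L a -> L b -> size a = size b -> weight b + 2 <= weight a ->
  exists w, [/\ palindrome w, L (true :: w ++ [:: true]) & L (false :: w ++ [:: false])].
  by move=> a b ha; apply: IH.
case: (classic (u' = v')) => [euv | neuv]; last first.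
  case: (firstdiff sz2 neuv) => z [c [d [s [t [cd eu ev st]]]]].
  subst u' v'.
  move: cd wu' Lu Lv; case: (c); case: (d) => // _ wu' Lu Lv.
    apply: (IHs (true :: z ++ [:: true]) (false :: z ++ [:: false])).
    - by move: hn; rewrite /= !size_cat /=; lia.
    - by apply: (Lp _ (s ++ [:: true])); rewrite /= -?catA /=; move: Lu Lv; rewrite /= -?catA /= => Lu Lv; first [exact: Lu | exact: Lv].
    - by apply: (Lp _ (t ++ [:: false])); rewrite /= -?catA /=; move: Lu Lv; rewrite /= -?catA /= => Lu Lv; first [exact: Lu | exact: Lv].
    - by rewrite /= !size_cat.
    - by rewrite !weight_cons !weight_cat /=; lia.
  apply: (IHs (s ++ [:: true]) (t ++ [:: false])).
  - by move: hn; rewrite /= !size_cat /=; lia.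
  - by apply: (Ls (true :: z ++ [:: false])); rewrite /= -?catA /=; move: Lu Lv; rewrite /= -?catA /= => Lu Lv; first [exact: Lu | exact: Lv].
  - by apply: (Ls (false :: z ++ [:: true])); rewrite /= -?catA /=; move: Lu Lv; rewrite /= -?catA /= => Lu Lv; first [exact: Lu | exact: Lv].
  - by rewrite !size_cat st.
  - move: wu'; rewrite !weight_cat !weight_cons /=; lia.
subst v'.
case: (classic (u' = rev u')) => [pu | npu].
  by exists u'; split.
case: (firstdiff (esym (size_rev u')) npu) => z [c [d [s [t [cd eu ev st]]]]].
have eu2 : u' = rev t ++ d :: rev z.
  by rewrite -[LHS]revK ev rev_cat rev_cons cat_rcons.
move: cd eu eu2 Lu Lv; case: (c); case: (d) => // _ eu eu2 Lu Lv.
  apply: (IHs (true :: z ++ [:: true]) (false :: rev z ++ [:: false])).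
  - by move: hn; rewrite eu /= !size_cat /=; lia.
  - by move: Lu; rewrite eu => Lu; apply: (Lp _ (s ++ [:: true])); rewrite /= -?catA /=; move: Lu Lv; rewrite /= -?catA /= => Lu Lv; first [exact: Lu | exact: Lv].
  - by move: Lv; rewrite eu2 => Lv; apply: (Ls (false :: rev t)); rewrite /= -?catA /=; move: Lu Lv; rewrite /= -?catA /= => Lu Lv; first [exact: Lu | exact: Lv].
  - by rewrite /= !size_cat size_rev.
  - by rewrite !weight_cons !weight_cat weight_rev /=; lia.
apply: (IHs (true :: rev z ++ [:: true]) (false :: z ++ [:: false])).
- by move: hn; rewrite eu /= !size_cat /= size_rev; lia.
- by move: Lu; rewrite eu2 => Lu; apply: (Ls (true :: rev t)); rewrite /= -?catA /=; move: Lu Lv; rewrite /= -?catA /= => Lu Lv; first [exact: Lu | exact: Lv].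
- by move: Lv; rewrite eu => Lv; apply: (Lp _ (s ++ [:: false])); rewrite /= -?catA /=; move: Lu Lv; rewrite /= -?catA /= => Lu Lv; first [exact: Lu | exact: Lv].
- by rewrite /= !size_cat size_rev.
- by rewrite !weight_cons !weight_cat weight_rev /=; lia.
Qed.

Definition G X v := is_factor X v \/ is_factor X (rev v).

Lemma Gcat X u v : G X (u ++ v) -> G X u /\ G X v.
Proof.
case=> [/factor_cat [] | ]; first by split; left.
rewrite rev_cat => /factor_cat [] h1 h2; split; right => //.
Qed.

Lemma Gbal X u v : sturmian X -> G X u -> G X v -> size u = size v -> weight v + 2 <= weight u -> False.
Proof.
move=> st Gu Gv sz hw.
case: (@B1 (G X) (@Gcat X) (size u) u v (leqnn _) Gu Gv sz hw) => w [pw G1 G2].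
have pal x : rev (x :: w ++ [:: x]) = x :: w ++ [:: x].
  by rewrite rev_cons rev_cat /= -pw -cats1.
apply: (nopal st pw); rewrite -cats1.
  by case: G1 => //; rewrite pal.
by case: G2 => //; rewrite pal.
Qed.

Definition GRS X v := G X (rcons v true) /\ G X (rcons v false).

Lemma GRS_uniq X n : sturmian X -> forall u v, size u = n -> size v = n -> GRS X u -> GRS X v -> u = v.
Proof.
move=> st; elim: n => [|n IH] [|c u] [|d v] //= [su] [sv] [g1 g2] [g3 g4].
have Gs : forall x y z, G X (x :: rcons y z) -> G X (rcons y z).
  by move=> x y z; rewrite -cat1s => /Gcat [].
have e : u = v.
  by apply: IH => //; split; [exact: (Gs c) | exact: (Gs c) | exact: (Gs d) | exact: (Gs d)].
subst v; case: (boolP (c == d)) => [/eqP -> // | ne].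
exfalso; apply: (@Gbal X (true :: rcons u true) (false :: rcons u false)) => //.
- by case: (c) (d) ne g1 g3 => -[].
- by case: (c) (d) ne g2 g4 => -[].
- by rewrite /= !size_rcons.
- by rewrite /weight /= -!cats1 !count_cat /=; lia.
Qed.

Definition facsG X n := [seq v <- allw n | cdec (G X v)].

Lemma facsGP X n v : v \in facsG X n <-> size v = n /\ G X v.
Proof.
rewrite mem_filter allwP; split.
  by case/andP => /ccdec h /eqP.
by case=> /eqP -> /ccdec ->.
Qed.

Lemma count_le1 (T : eqType) (p : pred T) (s : seq T) :
  uniq s -> (forall a b, a \in s -> b \in s -> p a -> p b -> a = b) -> count p s <= 1.
Proof.
move=> us h; rewrite -size_filter.
case e: [seq x <- s | p x] => [|a r] //.
have ha : a \in [seq x <- s | p x] by rewrite e inE eqxx.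
have : size (a :: r) <= size [:: a].
  apply: uniq_leq_size; first by rewrite -e filter_uniq.
  move=> b hb; rewrite inE; apply/eqP.
  rewrite -e !mem_filter in hb ha; case/andP: hb => pb sb; case/andP: ha => pa sa.
  exact: h.
by [].
Qed.

Lemma Gcount X n : sturmian X -> size (facsG X n) <= n.+1.
Proof.
move=> st; elim: n => [|n IH].
  by rewrite /facsG /=; case: cdec.
set pT := fun v => cdec (G X (rcons v true)).
set pF := fun v => cdec (G X (rcons v false)).
set T := [seq v <- facsG X n | pT v].
set F := [seq v <- facsG X n | pF v].
have h1 : size (facsG X n.+1) <= size T + size F.
  rewrite -[size T](size_map (rcons^~ true)) -[size F](size_map (rcons^~ false)) -size_cat.
  apply: uniq_leq_size; first by rewrite /facsG filter_uniq // uniq_allw.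
  - move=> w /facsGP [sw Gw]; case/lastP: w sw Gw => [|v x] //; rewrite size_rcons => -[sv] Gw.
    have Gv : G X v by case: (@Gcat X v [:: x]); rewrite ?cats1.
    rewrite mem_cat; apply/orP; case: x Gw => Gw; [left | right]; apply/mapP; exists v => //;
      rewrite mem_filter; apply/andP; split; try (apply/ccdec; exact: Gw); apply/facsGP; split => //.
have h2 : size T + size F <= size (facsG X n) + 1.
  rewrite [size T]size_filter [size F]size_filter -count_predUI.
  apply: leq_add; first exact: count_size.
  apply: count_le1; first by rewrite /facsG filter_uniq // uniq_allw.
  move=> a b /facsGP [sa _] /facsGP [sb _] /andP [/ccdec ha1 /ccdec ha2] /andP [/ccdec hb1 /ccdec hb2].
  by apply: (GRS_uniq st sa sb); split.
lia.
Qed.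

Lemma rev_factor X u : sturmian X -> is_factor X u -> is_factor X (rev u).
Proof.
move=> st fu; apply: NNPP => nr.
have : size (facs X (size u) ++ [:: rev u]) <= size (facsG X (size u)).
  apply: uniq_leq_size.
    rewrite cat_uniq uniq_facs /= andbT orbF; apply/negP => /facsP [_ h]; exact: nr h.
  move=> v; rewrite mem_cat inE => /orP [/facsP [sv fv] | /eqP ->]; apply/facsGP.
    by split => //; left.
  by rewrite size_rev; split => //; right; rewrite revK.
rewrite size_cat sturm_size //= => h; have := Gcount (size u) st; lia.
Qed.


Definition Pal (X : word) a b := forall t, a <= t <= b -> X t = X (a + b - t).

Lemma subw_fac X a b : subw X a b = fac X a (b.+1 - a).
Proof.
rewrite /subw /fac /mkseq; apply: (@eq_from_nth _ false); rewrite ?size_map ?size_iota // => t ht.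
by rewrite (nth_map 0) ?(nth_map 0) ?size_iota // !nth_iota // add0n.
Qed.

Lemma pal_facP X a m : palindrome (fac X a m) <-> forall t, t < m -> X (a + t) = X (a + m - t.+1).
Proof.
rewrite /palindrome; split.
  move=> e t ht; rewrite -(nth_fac X a ht) e nth_rev size_fac // nth_fac; last lia.
  by congr X; lia.
move=> h; apply: (@eq_from_nth _ false); rewrite ?size_rev // => t ht.
rewrite size_fac in ht; rewrite nth_rev size_fac // !nth_fac; try lia.
by rewrite h //; congr X; lia.
Qed.

Lemma Pal_ext X a b : Pal X a b -> 0 < a -> X a.-1 = X b.+1 -> Pal X a.-1 b.+1.
Proof.
move=> h a0 e t /andP [h1 h2].
case: (ltnP t a) => ta.
  have -> : t = a.-1 by lia.
  by rewrite e; congr X; lia.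
case: (ltnP b t) => tb.
  have -> : t = b.+1 by lia.
  by rewrite -e; congr X; lia.
rewrite h ?ta ?tb //; congr X; lia.
Qed.

Lemma pal_subw X a b : a <= b -> Pal X a b -> palindrome (subw X a b).
Proof.
move=> ab h; rewrite subw_fac; apply/pal_facP => t ht.
rewrite h; first by congr X; lia.
lia.
Qed.

Definition Concl (X : word) (P : seq bool) :=
  exists i' i j j' : nat,
    [/\ i' < i, i <= j, j < j' & 1 <= i'] /\
    [/\ i + j = i' + j', subw X i j = P, X i.-1 = X j.+1,
        palindrome (subw X i' j') & X i'.-1 != X j'.+1].

Definition good X P i := [/\ 0 < i, fac X i (size P) = P & X i.-1 = X (i + size P)].

Lemma nw_pal X P i : palindrome P -> 0 < size P -> ~ Concl X P -> good X P i ->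
  Pal X 0 (i + (i + (size P).-1)).
Proof.
move=> pP nP nc [i0 fi li]; set n := size P; set j := i + n.-1.
have sub : subw X i j = P by rewrite subw_fac; have -> : j.+1 - i = n by rewrite /j; lia.
have base : Pal X i j.
  move=> t /andP [h1 h2].
  have pf : palindrome (fac X i n) by rewrite /palindrome /n fi.
  have := (proj1 (pal_facP X i n)) pf (t - i) ltac:(lia).
  have -> : i + (t - i) = t by lia.
  by move=> ->; congr X; lia.
have ind : forall r, r <= i -> Pal X (i - r) (j + r).
  elim=> [|r IH] hr; first by rewrite subn0 addn0.
  have IH' := IH (ltnW hr).
  have -> : i - r.+1 = (i - r).-1 by lia.
  rewrite addnS; apply: Pal_ext => //; first lia.
  case: (posnP r) => [-> | r0].
    by rewrite subn0 addn0 li /j; congr X; lia.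
  apply: NNPP => ne; apply: nc.
  exists (i - r), i, j, (j + r); split; split => //; try lia.
  - by rewrite li /j; congr X; lia.
  - by apply: pal_subw IH'; lia.
have := ind i (leqnn i); rewrite subnn.
by rewrite addnC.
Qed.

Lemma mirror X P i1 s2 : palindrome P -> 0 < size P -> good X P i1 -> Pal X 0 s2 ->
  i1 + (i1 + (size P).-1) <= s2 -> good X P (s2 - (i1 + (i1 + (size P).-1)) + i1).
Proof.
move=> pP nP [i0 fi li] hp hs.
have fP : forall m, m < size P -> X (i1 + m) = nth false P m.
  by move=> m hm; rewrite -fi nth_fac.
split.
- lia.
- apply: (@eq_from_nth _ false); rewrite ?size_fac // => m hm.
  rewrite nth_fac //.
  rewrite (hp (s2 - (i1 + (i1 + (size P).-1)) + i1 + m)); last lia.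
  have -> : 0 + s2 - (s2 - (i1 + (i1 + (size P).-1)) + i1 + m) = i1 + (size P - m.+1) by lia.
  rewrite (pal_nth pP hm) fP //; lia.
- rewrite (hp (s2 - (i1 + (i1 + (size P).-1)) + i1).-1); last lia.
  rewrite (hp (s2 - (i1 + (i1 + (size P).-1)) + i1 + size P)); last lia.
  have -> : 0 + s2 - (s2 - (i1 + (i1 + (size P).-1)) + i1).-1 = i1 + size P by lia.
  have -> : 0 + s2 - (s2 - (i1 + (i1 + (size P).-1)) + i1 + size P) = i1.-1 by lia.
  by rewrite li.
Qed.

Lemma two_good X P i1 i2 : sturmian X -> palindrome P -> 0 < size P -> ~ Concl X P ->
  good X P i1 -> good X P i2 -> i1 < i2 -> False.
Proof.
move=> st pP nP nc g1 g2 lt.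
set d := i2 - i1.
have cl : forall k, exists b, [/\ good X P b, good X P (b + d) & k <= b].
  elim=> [|k [b [gb gbd kb]]].
    by exists i1; split => //; rewrite /d subnKC // ltnW.
  exists (b + d); split => //; last by rewrite /d; lia.
  have := mirror pP nP gb (nw_pal pP nP nc gbd) ltac:(lia).
  by have -> : b + d + (b + d + (size P).-1) - (b + (b + (size P).-1)) + b = b + d + d by lia.
case: st => ap _; apply: ap; exists (d + d), 0; split; first by rewrite /d; lia.
move=> m _.
case: (cl m) => b [gb gbd mb].
have p1 := nw_pal pP nP nc gb; have p2 := nw_pal pP nP nc gbd.
rewrite (p2 (m + (d + d))); last lia.
rewrite (p1 m); last lia.
congr X; lia.
Qed.

Lemma good_of X P k c : fac X k (size P).+2 = c :: rcons P c -> good X P k.+1.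
Proof.
rewrite fac_cons2 => -[e1 /rcons_inj [e2 e3]].
by split => //; rewrite e1 e3.
Qed.

Theorem lemma6 (X : word) (P : seq bool) :
  sturmian X -> palindrome P -> maximal_pal X P -> 0 < size P ->
  exists i' i j j' : nat,
    [/\ i' < i, i <= j, j < j' & 1 <= i'] /\
    [/\ i + j = i' + j', subw X i j = P, X i.-1 = X j.+1,
        palindrome (subw X i' j') & X i'.-1 != X j'.+1].
Proof.
move=> st pP [l [l' [ll' f]]] nP.
change (Concl X P); apply: NNPP => nc.
have f' : is_factor X (l' :: rcons P l).
  have := rev_factor st f.
  by rewrite rev_cons rev_rcons /= -pP.
have rP : RS X P.
  by apply: (RS_of ll'); [exact: factor_cons f' | exact: factor_cons f].
have [v [sv rv]] : exists v, size v = (size P).+1 /\ RS X v.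
  by apply: rs_exists; rewrite !sturm_size.
case: v sv rv => [|c v'] // [sv'] [rv1 rv2].
have ev : v' = P.
  apply: (sturm_RS_uniq st sv' (erefl _)) => //.
  by split; [exact: factor_cons rv1 | exact: factor_cons rv2].
subst v'.
have f3 : is_factor X (c :: rcons P c) by case: (c) rv1 rv2.
case: (recur 0 st f3) => k1 [_ e1].
case: (recur k1.+1 st f3) => k2 [h2 e2].
move: e1 e2; rewrite /= size_rcons => e1 e2.
apply: (two_good st pP nP nc (good_of e1) (good_of e2)); lia.
Qed.
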